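(* Let $A$ be an EFO branch such that every finite subset of $A$ has a standard model. Then $A$ has a standard model $\mathcal{I}$ in which $\mathcal{I}\alpha$ is countable for every sort $\alpha$.
   Context: Types: a countable set of base types including a distinguished $o$; other base types are sorts ($\alpha$). Types: base types and $\sigma\tau$ (functions from $\sigma$ to $\tau$; $\sigma\tau\mu=\sigma(\tau\mu)$). Countably many names with unique types, infinitely many per type. Terms: names; $st:\mu$ for $s:\tau\mu,t:\tau$; $\lambda x.t:\sigma\tau$ for a name $x:\sigma$, $t:\tau$. Logical constants: $\neg:oo$, $\to:ooo$, $=_\sigma:\sigma\sigma o$ for every type $\sigma$, and $\forall_\alpha:(\alpha o)o$ for every sort $\alpha$; all other names are variables. Formulas: terms of type $o$; $s\neq_\sigma t$ is $\neg((=_\sigma s)t)$. A term is EFO if the only logical constants occurring in it are $\neg$, $\to$, $=_\alpha$ and $\forall_\alpha$ ($\alpha$ sorts). A formula is quasi-EFO if it is EFO or of the form $s\neq_\sigma t$ with $s,t$ EFO. Semantics: a frame $\mathcal{D}$ maps types to nonempty sets with $\mathcal{D}(\sigma\tau)\subseteq(\mathcal{D}\sigma\to\mathcal{D}\tau)$; standard if $\mathcal{D}(\sigma\tau)=(\mathcal{D}\sigma\to\mathcal{D}\tau)$. An assignment $\mathcal{I}$ into $\mathcal{D}$ extends $\mathcal{D}$ and maps names $x:\sigma$ into $\mathcal{D}\sigma$; $\mathcal{I}^x_a$ is the update. Evaluation: $\hat{\mathcal{I}}x=\mathcal{I}x$; $\hat{\mathcal{I}}(st)=(\hat{\mathcal{I}}s)(\hat{\mathcal{I}}t)$;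 $\hat{\mathcal{I}}(\lambda x.s)=f$ if $\lambda x.s:\sigma\tau$, $f\in\mathcal{D}(\sigma\tau)$ and $\widehat{\mathcal{I}^x_a}s=fa$ for all $a\in\mathcal{D}\sigma$ (total in a standard frame). Logical: $\mathcal{I}o=\{0,1\}$, $\mathcal{I}(\neg)$ negation, $\mathcal{I}(\to)$ implication, $\mathcal{I}(=_\sigma)$ identity, $\mathcal{I}(\forall_\alpha)f=1$ iff $f$ is the constant function $1$. A standard model of a set of formulas is a logical assignment into a standard frame evaluating each of them to $1$. Normalization: fixed type-preserving total $[\cdot]$; $s$ normal iff $[s]=s$; (N1) $[[s]]=[s]$; (N2) $[[s]t]=[st]$; (N3) $[ys_1\dots s_n]=y[s_1]\dots[s_n]$ for a name $y$, $n\ge0$, $ys_1\dots s_n$ of base type; (N4) $\hat{\mathcal{I}}[s]=\hat{\mathcal{I}}s$ for every interpretation (assignment whose evaluation is total). Substitutions: type-preserving partial functions $\theta$ from names to terms ($\theta^x_s$ update), each extending to a type-preserving total $\hat\theta$ with (S1) $\hat\theta x=\theta x$ if $x\in\mathrm{Dom}\theta$, else $x$; (S2) $\hat\theta(st)=(\hat\theta s)(\hat\theta t)$; (S3) $[(\hat\theta(\lambda x.s))t]=[\widehat{\theta^x_t}s]$; (S4) $[\hat\emptyset s]=[s]$. An EFO branch is a set of normal quasi-EFO formulas. *)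

(* Defs.v *)
From Stdlib Require Import List PeanoNat.

(* Base types are indexed by nat: TBase 0 is the distinguished type o,
   TBase (S a) is the sort number a. *)
Inductive ty : Type :=
| TBase (b : nat)
| TArr (s t : ty).

Definition o : ty := TBase 0.
Definition sort (a : nat) : ty := TBase (S a).

Definition is_sort (s : ty) : bool :=
  match s with TBase (S _) => true | _ => false end.
Definition is_base (s : ty) : bool :=
  match s with TBase _ => true | _ => false end.

Inductive name : Type :=
| NNeg
| NImp
| NEq (s : ty)
| NAll (a : nat)
| NVar (s : ty) (n : nat).

Definition ntype (x : name) : ty :=
  match x with
  | NNeg => TArr o o
  | NImp => TArr o (TArr o o)
  | NEq s => TArr s (TArr s o)
  | NAll a => TArr (TArr (sort a) o) o
  | NVar s _ => s
  end.

Definition ty_eq_dec (s t : ty) : {s = t} + {s <> t}.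
Proof. decide equality; apply Nat.eq_dec. Defined.

Definition name_eq_dec (x y : name) : {x = y} + {x <> y}.
Proof. decide equality; try apply ty_eq_dec; apply Nat.eq_dec. Defined.

Inductive tm : ty -> Type :=
| TN (x : name) : tm (ntype x)
| TA (s t : ty) : tm (TArr s t) -> tm s -> tm t
| TL (x : name) (t : ty) : tm t -> tm (TArr (ntype x) t).

Arguments TA {s t} _ _.
Arguments TL x {t} _.

Definition neq {s : ty} (a b : tm s) : tm o :=
  @TA o o (TN NNeg) (@TA s o (@TA s (TArr s o) (TN (NEq s)) a) b).

Definition name_efo (x : name) : bool :=
  match x with
  | NEq s => is_sort s
  | _ => true
  end.

(* A name "occurs" in a term also when it occurs as a binder. *)
Fixpoint efo {s : ty} (t : tm s) : bool :=
  match t with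
  | TN x => name_efo x
  | TA u w => efo u && efo w
  | TL x b => name_efo x && efo b
  end.

Definition quasi_efo (f : tm o) : Prop :=
  efo f = true \/
  exists (s : ty) (a b : tm s), efo a = true /\ efo b = true /\ f = neq a b.

(* A frame assigns a nonempty set to every type; D(s t) is (identified,
   via the injective application map) with a set of functions D s -> D t. *)
Record frame : Type := {
  D : ty -> Type;
  D_ne : forall s, inhabited (D s);
  app : forall s t, D (TArr s t) -> D s -> D t;
  app_ext : forall s t (f g : D (TArr s t)),
      (forall a, app s t f a = app s t g a) -> f = g
}.
Arguments app f0 {s t} _ _.

Definition standard (F : frame) : Prop :=
  forall s t (h : D F s -> D F t), exists f : D F (TArr s t), forall a, app F f a = h a.

Definition asg (F : frame) : Type := forall x : name, D F (ntype x).

Definition upd (F : frame) (I : asg F) (x : name) (a : D F (ntype x)) : asg F :=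
  fun y => match name_eq_dec x y with
           | left e => eq_rect x (fun z => D F (ntype z)) a y e
           | right _ => I y
           end.

(* evaluation (a partial function, given as a relation) *)
Inductive ev (F : frame) : asg F -> forall s, tm s -> D F s -> Prop :=
| ev_N (I : asg F) (x : name) : ev F I _ (TN x) (I x)
| ev_A (I : asg F) (s t : ty) (u : tm (TArr s t)) (w : tm s) f a :
    ev F I _ u f -> ev F I _ w a -> ev F I _ (TA u w) (app F f a)
| ev_L (I : asg F) (x : name) (t : ty) (b : tm t) (f : D F (TArr (ntype x) t)) :
    (forall a, ev F (upd F I x a) _ b (app F f a)) -> ev F I _ (TL x b) f.

Definition interp (F : frame) (I : asg F) : Prop :=
  forall s (t : tm s), exists v, ev F I s t v.

(* logical assignment: D o is {0,1} (identified via the bijection tv with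
   bool), and the logical constants get their intended meaning *)
Definition logical (F : frame) (I : asg F) (tv : D F o -> bool) : Prop :=
  (forall v w, tv v = tv w -> v = w) /\ (forall b, exists v, tv v = b) /\
  (forall a, tv (@app F o o (I NNeg) a) = negb (tv a)) /\
  (forall a b, tv (@app F o o (@app F o (TArr o o) (I NImp) a) b) = implb (tv a) (tv b)) /\
  (forall s (a b : D F s),
      tv (@app F s o (@app F s (TArr s o) (I (NEq s)) a) b) = true <-> a = b) /\
  (forall al (f : D F (TArr (sort al) o)),
      tv (@app F (TArr (sort al) o) o (I (NAll al)) f) = true <->
      forall a, tv (app F f a) = true).

Definition std_model (A : tm o -> Prop) (F : frame) (I : asg F) (tv : D F o -> bool) : Prop :=
  standard F /\ logical F I tv /\
  forall f, A f -> exists v, ev F I o f v /\ tv v = true.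

Definition has_std_model (A : tm o -> Prop) : Prop :=
  exists (F : frame) (I : asg F) (tv : D F o -> bool), std_model A F I tv.

Definition countable_type (T : Type) : Prop :=
  exists f : T -> nat, forall x y, f x = f y -> x = y.

Fixpoint head_name {s : ty} (t : tm s) : bool :=
  match t with
  | TN _ => true
  | TA u _ => head_name u
  | TL _ _ => false
  end.

Fixpoint map_args (f : forall s, tm s -> tm s) {s : ty} (t : tm s) : tm s :=
  match t with
  | TN x => TN x
  | TA u w => TA (map_args f u) (f _ w)
  | TL x b => TL x b
  end.

Record normalizer (norm : forall s, tm s -> tm s) : Prop := {
  N1 : forall s (t : tm s), norm s (norm s t) = norm s t;
  N2 : forall s t (u : tm (TArr s t)) (w : tm s), norm t (TA (norm _ u) w) = norm t (TA u w);
  N3 : forall s (t : tm s), is_base s = true -> head_name t = true -> norm s t = map_args norm t;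
  N4 : forall (F : frame) (I : asg F), interp F I ->
       forall s (t : tm s) v, ev F I s (norm s t) v <-> ev F I s t v
}.

Definition normal (norm : forall s, tm s -> tm s) {s : ty} (t : tm s) : Prop := norm s t = t.

Definition subst : Type := forall x : name, option (tm (ntype x)).

Definition supd (th : subst) (x : name) (t : tm (ntype x)) : subst :=
  fun y => match name_eq_dec x y with
           | left e => Some (eq_rect x (fun z => tm (ntype z)) t y e)
           | right _ => th y
           end.

Record subst_op (norm : forall s, tm s -> tm s) (sapp : subst -> forall s, tm s -> tm s) : Prop := {
  S1 : forall th x, sapp th _ (TN x) = match th x with Some t => t | None => TN x end;
  S2 : forall th s t (u : tm (TArr s t)) (w : tm s), sapp th t (TA u w) = TA (sapp th _ u) (sapp th s w);
  S3 : forall th x t (b : tm t) (w : tm (ntype x)),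
       norm t (TA (sapp th _ (TL x b)) w) = norm t (sapp (supd th x w) t b);
  S4 : forall s (t : tm s), norm s (sapp (fun _ => None) s t) = norm s t
}.

Definition efo_branch (norm : forall s, tm s -> tm s) (A : tm o -> Prop) : Prop :=
  forall f, A f -> normal norm f /\ quasi_efo f.

(* Main.v *)
From Stdlib Require Import List PeanoNat Eqdep_dec ClassicalEpsilon Classical FunctionalExtensionality ProofIrrelevance Cantor.
Require Import Defs.

Lemma ev_inv (F : frame) (I : asg F) s (t : tm s) v (H : ev F I s t v) :
  match t in tm s return D F s -> Prop with
  | TN x => fun v => v = I x
  | @TA s0 t0 u w => fun v => exists f a, ev F I _ u f /\ ev F I _ w a /\ v = app F f a
  | TL x b => fun v => forall a, ev F (upd F I x a) _ b (app F v a)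
  end v.
Proof. destruct H; eauto. Qed.

Lemma ev_det (F : frame) s (t : tm s) : forall I v v',
  ev F I s t v -> ev F I s t v' -> v = v'.
Proof.
  induction t; intros I v v' H1 H2; apply ev_inv in H1; apply ev_inv in H2; simpl in *.
  - congruence.
  - destruct H1 as (f&a&Hf&Ha&->). destruct H2 as (f'&a'&Hf'&Ha'&->).
    rewrite (IHt1 _ _ _ Hf Hf'), (IHt2 _ _ _ Ha Ha'). reflexivity.
  - apply app_ext. intro a. eapply IHt; eauto.
Qed.

Lemma ev_ex (F : frame) (HF : standard F) s (t : tm s) : forall I, exists v, ev F I s t v.
Proof.
  induction t; intros I.
  - eexists; constructor.
  - destruct (IHt1 I) as [f Hf]; destruct (IHt2 I) as [a Ha]. eexists; econstructor; eauto.
  - pose (h := fun a => proj1_sig (constructive_indefinite_description _ (IHt (upd F I x a)))).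
    destruct (HF _ _ h) as [f Hf]. exists f. constructor. intro a. rewrite Hf.
    unfold h. exact (proj2_sig (constructive_indefinite_description _ (IHt (upd F I x a)))).
Qed.

Definition val (F : frame) (HF : standard F) (I : asg F) s (t : tm s) : D F s :=
  proj1_sig (constructive_indefinite_description _ (ev_ex F HF s t I)).

Lemma val_ev F HF I s t : ev F I s t (val F HF I s t).
Proof. exact (proj2_sig (constructive_indefinite_description _ (ev_ex F HF s t I))). Qed.

Lemma val_eq F HF I s t v : ev F I s t v -> val F HF I s t = v.
Proof. intro H. eapply ev_det; [apply val_ev|exact H]. Qed.

Definition P (x y : nat) : nat := Cantor.to_nat (x, y).
Lemma Pinj x y x' y' : P x y = P x' y' -> x = x' /\ y = y'.
Proof.
  unfold P; intro H. assert (H' := f_equal Cantor.of_nat H).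
  rewrite !Cantor.cancel_of_to in H'. inversion H'; auto.
Qed.

Fixpoint enc_ty (s : ty) : nat :=
  match s with TBase b => P 0 b | TArr s t => P 1 (P (enc_ty s) (enc_ty t)) end.
Lemma enc_ty_inj s s' : enc_ty s = enc_ty s' -> s = s'.
Proof.
  revert s'; induction s; destruct s'; simpl; intro H; apply Pinj in H; destruct H as [H1 H2];
    try discriminate.
  - subst; auto.
  - apply Pinj in H2; destruct H2; f_equal; auto.
Qed.

Definition enc_name (x : name) : nat :=
  match x with
  | NNeg => P 0 0 | NImp => P 1 0 | NEq s => P 2 (enc_ty s) | NAll a => P 3 a
  | NVar s n => P 4 (P (enc_ty s) n) end.
Lemma enc_name_inj x x' : enc_name x = enc_name x' -> x = x'.
Proof.
  destruct x, x'; simpl; intro H; apply Pinj in H; destruct H as [H1 H2]; try discriminate; auto.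
  - f_equal; apply enc_ty_inj; auto.
  - apply Pinj in H2; destruct H2; f_equal; auto; apply enc_ty_inj; auto.
Qed.

Fixpoint enc_tm {s} (t : tm s) : nat :=
  match t with
  | TN x => P 0 (enc_name x)
  | TA u w => P 1 (P (enc_tm u) (enc_tm w))
  | TL x b => P 2 (P (enc_name x) (enc_tm b))
  end.

Lemma ty_dec' : forall x y : ty, x = y \/ x <> y.
Proof. intros x y; destruct (ty_eq_dec x y); auto. Qed.

Lemma enc_tm_inj s (t : tm s) : forall s' (t' : tm s'), enc_tm t = enc_tm t' ->
  existT tm s t = existT tm s' t'.
Proof.
  induction t; intros s' t'; destruct t'; simpl; intro H; apply Pinj in H; destruct H as [H1 H2];
    try discriminate.
  - apply enc_name_inj in H2; subst; reflexivity.
  - apply Pinj in H2; destruct H2 as [H2 H3].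
    apply IHt1 in H2. apply IHt2 in H3.
    assert (E := f_equal (@projT1 _ _) H2); simpl in E; injection E; intros; subst.
    apply inj_pair2_eq_dec in H2; [|exact ty_eq_dec]. apply inj_pair2_eq_dec in H3; [|exact ty_eq_dec].
    subst; reflexivity.
  - apply Pinj in H2; destruct H2 as [H2 H3]. apply enc_name_inj in H2; subst.
    apply IHt in H3.
    assert (E := f_equal (@projT1 _ _) H3); simpl in E; subst.
    apply inj_pair2_eq_dec in H3; [|exact ty_eq_dec]. subst; reflexivity.
Qed.

Inductive code : ty -> Type :=
| CTm (s : ty) (t : tm s) : code s
| CApp (s t : ty) : code (TArr s t) -> code s -> code t
| CDiff (s t : ty) : code (TArr s t) -> code (TArr s t) -> code s
| CWit (a : nat) : code (TArr (sort a) o) -> code (sort a).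

Fixpoint enc_code {s} (c : code s) : nat :=
  match c with
  | CTm _ t => P 0 (enc_tm t)
  | CApp _ _ c1 c2 => P 1 (P (enc_code c1) (enc_code c2))
  | CDiff _ _ c1 c2 => P 2 (P (enc_code c1) (enc_code c2))
  | CWit _ c => P 3 (enc_code c)
  end.

Lemma enc_code_inj s (c : code s) : forall s' (c' : code s'), enc_code c = enc_code c' ->
  existT code s c = existT code s' c'.
Proof.
  induction c; intros s' c'; destruct c'; simpl; intro H; apply Pinj in H; destruct H as [H1 H2];
    try discriminate.
  - apply enc_tm_inj in H2.
    assert (E := f_equal (@projT1 _ _) H2); simpl in E; subst.
    apply inj_pair2_eq_dec in H2; [|exact ty_eq_dec]. subst; reflexivity.
  - apply Pinj in H2; destruct H2 as [H2 H3].
    apply IHc1 in H2. apply IHc2 in H3.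
    assert (E := f_equal (@projT1 _ _) H2); simpl in E; injection E; intros; subst.
    apply inj_pair2_eq_dec in H2; [|exact ty_eq_dec]. apply inj_pair2_eq_dec in H3; [|exact ty_eq_dec].
    subst; reflexivity.
  - apply Pinj in H2; destruct H2 as [H2 H3].
    apply IHc1 in H2. apply IHc2 in H3.
    assert (E := f_equal (@projT1 _ _) H2); simpl in E; injection E; intros; subst.
    apply inj_pair2_eq_dec in H2; [|exact ty_eq_dec]. apply inj_pair2_eq_dec in H3; [|exact ty_eq_dec].
    subst; reflexivity.
  - apply IHc in H2.
    assert (E := f_equal (@projT1 _ _) H2); simpl in E; injection E; intros; subst.
    apply inj_pair2_eq_dec in H2; [|exact ty_eq_dec]. subst; reflexivity.
Qed.

Lemma enc_code_inj' s (c c' : code s) : enc_code c = enc_code c' -> c = c'.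
Proof. intro H. apply enc_code_inj in H. apply inj_pair2_eq_dec in H; [auto|exact ty_eq_dec]. Qed.

Record MF := {
  Fm : list (tm o) -> frame;
  Im : forall l, asg (Fm l);
  tvm : forall l, D (Fm l) o -> bool;
  Hstd : forall l, standard (Fm l);
  Hlog : forall l, logical (Fm l) (Im l) (tvm l) }.

Definition Lst := list (tm o).
Definition fam (M : MF) s := forall l, D (Fm M l) s.
Definition fapp (M : MF) {s t} (p : fam M (TArr s t)) (z : fam M s) : fam M t :=
  fun l => app (Fm M l) (p l) (z l).

Lemma dwit_ex (F : frame) s t (f g : D F (TArr s t)) :
  exists a, f <> g -> app F f a <> app F g a.
Proof.
  destruct (classic (f = g)) as [->|Hne].
  - destruct (D_ne F s) as [a]. exists a. tauto.
  - destruct (classic (exists a, app F f a <> app F g a)) as [[a Ha]|Hn].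
    + exists a; auto.
    + exfalso. apply Hne, app_ext. intro a. destruct (classic (app F f a = app F g a)); auto.
      exfalso; eauto.
Qed.
Definition dwit (F : frame) s t (f g : D F (TArr s t)) : D F s :=
  proj1_sig (constructive_indefinite_description _ (dwit_ex F s t f g)).
Lemma dwit_spec F s t f g : f <> g -> app F f (dwit F s t f g) <> app F g (dwit F s t f g).
Proof. exact (proj2_sig (constructive_indefinite_description _ (dwit_ex F s t f g))). Qed.

Lemma awit_ex (F : frame) (tv : D F o -> bool) a (p : D F (TArr (sort a) o)) :
  exists z, (exists z', tv (app F p z') = false) -> tv (app F p z) = false.
Proof.
  destruct (classic (exists z', tv (app F p z') = false)) as [[z Hz]|Hn].
  - exists z; auto.
  - destruct (D_ne F (sort a)) as [z]. exists z. tauto.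
Qed.
Definition awit (F : frame) tv a p : D F (sort a) :=
  proj1_sig (constructive_indefinite_description _ (awit_ex F tv a p)).
Lemma awit_spec F tv a p : (exists z', tv (app F p z') = false) -> tv (app F p (awit F tv a p)) = false.
Proof. exact (proj2_sig (constructive_indefinite_description _ (awit_ex F tv a p))). Qed.

Fixpoint cval (M : MF) s (c : code s) : fam M s :=
  match c in code s return fam M s with
  | CTm s t => fun l => val (Fm M l) (Hstd M l) (Im M l) s t
  | CApp s t c1 c2 => fun l => app (Fm M l) (cval M _ c1 l) (cval M _ c2 l)
  | CDiff s t c1 c2 => fun l => dwit (Fm M l) s t (cval M _ c1 l) (cval M _ c2 l)
  | CWit a c => fun l => awit (Fm M l) (tvm M l) a (cval M _ c l)
  end.

Definition inQ (M : MF) s (p : fam M s) : Prop := exists c : code s, p = cval M s c.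

Record UP (M : MF) (U : (Lst -> Prop) -> Prop) : Prop := {
  U_mono : forall Y Y', U Y -> (forall l, Y l -> Y' l) -> U Y';
  U_and : forall Y Y', U Y -> U Y' -> U (fun l => Y l /\ Y' l);
  U_prop : ~ U (fun _ => False);
  U_true : U (fun _ => True);
  U_dtv : forall (c : code o), U (fun l => tvm M l (cval M _ c l) = true) \/
                            U (fun l => tvm M l (cval M _ c l) <> true) }.

Definition ceq (M : MF) U s (c1 c2 : code s) : Prop := U (fun l => cval M s c1 l = cval M s c2 l).

Lemma ceq_refl M U (HU : UP M U) s c : ceq M U s c c.
Proof. apply (U_mono _ _ HU (fun _ => True)); [apply HU|]. simpl; auto. Qed.
Lemma ceq_sym M U (HU : UP M U) s c c' : ceq M U s c c' -> ceq M U s c' c.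
Proof. intro H. apply (U_mono _ _ HU _ _ H). simpl; auto. Qed.
Lemma ceq_trans M U (HU : UP M U) s c1 c2 c3 : ceq M U s c1 c2 -> ceq M U s c2 c3 -> ceq M U s c1 c3.
Proof. intros H1 H2. apply (U_mono _ _ HU _ _ (U_and _ _ HU _ _ H1 H2)). simpl; intros l [-> ->]; auto. Qed.

Definition isrep M U a (c : code (sort a)) : Prop :=
  forall c', ceq M U (sort a) c' c -> enc_code c <= enc_code c'.
Definition Dsort M U a : Type := { c : code (sort a) | isrep M U a c }.

Lemma nat_min (Q : nat -> Prop) n : Q n -> exists m, Q m /\ forall k, Q k -> m <= k.
Proof.
  revert Q. induction n as [n IH] using (well_founded_induction Wf_nat.lt_wf). intros Q Hn.
  destruct (classic (exists k, k < n /\ Q k)) as [[k [Hk HQ]]|Hn'].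
  - exact (IH k Hk Q HQ).
  - exists n; split; auto. intros k Hk. destruct (Nat.le_gt_cases n k); auto.
    exfalso; eauto.
Qed.

Lemma rep_ex M U (HU : UP M U) a (c : code (sort a)) :
  exists c0, ceq M U _ c0 c /\ isrep M U a c0.
Proof.
  destruct (nat_min (fun n => exists c', ceq M U _ c' c /\ enc_code c' = n) (enc_code c))
    as [m [[c0 [H0 E0]] Hm]].
  - exists c; split; auto. apply ceq_refl; auto.
  - exists c0; split; auto. intros c' Hc'. subst m. apply Hm. exists c'; split; auto.
    eapply ceq_trans; eauto.
Qed.

Definition cls M U (HU : UP M U) a (c : code (sort a)) : Dsort M U a :=
  let H := constructive_indefinite_description _ (rep_ex M U HU a c) in
  exist _ (proj1_sig H) (proj2 (proj2_sig H)).

Lemma cls_ceq M U HU a c : ceq M U _ (proj1_sig (cls M U HU a c)) c.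
Proof. unfold cls. simpl. exact (proj1 (proj2_sig (constructive_indefinite_description _ (rep_ex M U HU a c)))). Qed.

Lemma rep_uniq M U (HU : UP M U) a (c c' : code (sort a)) :
  isrep M U a c -> isrep M U a c' -> ceq M U _ c c' -> c = c'.
Proof.
  intros H H' E. apply enc_code_inj'. apply Nat.le_antisymm.
  - apply H. apply ceq_sym; auto.
  - apply H'. auto.
Qed.

Lemma Dsort_eq M U a (d d' : Dsort M U a) : proj1_sig d = proj1_sig d' -> d = d'.
Proof. destruct d, d'; simpl; intro; subst; f_equal; apply proof_irrelevance. Qed.

Lemma cls_eq M U HU a c c' : ceq M U _ c c' -> cls M U HU a c = cls M U HU a c'.
Proof.
  intro E. apply Dsort_eq. apply rep_uniq with (M:=M) (U:=U); auto.
  - exact (proj2_sig (cls M U HU a c)).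
  - exact (proj2_sig (cls M U HU a c')).
  - eapply ceq_trans; [auto|apply cls_ceq|]. eapply ceq_trans; [auto|exact E|].
    apply ceq_sym; auto; apply cls_ceq.
Qed.

Lemma cls_rep M U HU a (d : Dsort M U a) : cls M U HU a (proj1_sig d) = d.
Proof.
  apply Dsort_eq. apply rep_uniq with (M:=M) (U:=U); auto.
  - exact (proj2_sig (cls M U HU a _)).
  - exact (proj2_sig d).
  - apply cls_ceq.
Qed.

Fixpoint Dm M U (s : ty) : Type :=
  match s with
  | TBase 0 => bool
  | TBase (S a) => Dsort M U a
  | TArr s t => Dm M U s -> Dm M U t
  end.

Fixpoint Dm_def M U (HU : UP M U) (s : ty) : Dm M U s :=
  match s return Dm M U s with
  | TBase 0 => true
  | TBase (S a) => cls M U HU a (CTm (sort a) (TN (NVar (sort a) 0)))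
  | TArr s t => fun _ => Dm_def M U HU t
  end.

Fixpoint R M U (s : ty) : fam M s -> Dm M U s -> Prop :=
  match s return fam M s -> Dm M U s -> Prop with
  | TBase b =>
    match b return fam M (TBase b) -> Dm M U (TBase b) -> Prop with
    | 0 => fun p x => inQ M o p /\ (x = true <-> U (fun l => tvm M l (p l) = true))
    | S a => fun p d => exists c, p = cval M (sort a) c /\ ceq M U _ c (proj1_sig d)
    end
  | TArr s t => fun p g => inQ M (TArr s t) p /\
      forall z x, R M U s z x -> R M U t (fapp M p z) (g x)
  end.

Lemma R_inQ M U s p x : R M U s p x -> inQ M s p.
Proof.
  destruct s as [[|a]|s t]; simpl; intro H.
  - apply H.
  - destruct H as [c [-> _]]. exists c; auto.
  - apply H.
Qed.

Lemma tv_inj M l v w : tvm M l v = tvm M l w -> v = w.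
Proof. apply (Hlog M l). Qed.

Lemma J M U (HU : UP M U) s :
  (forall c : code s, exists x, R M U s (cval M s c) x) /\
  (forall p p' x, R M U s p x -> R M U s p' x -> U (fun l => p l = p' l)) /\
  (forall p p' x, R M U s p x -> inQ M s p' -> U (fun l => p l = p' l) -> R M U s p' x).
Proof.
  induction s as [[|a]|s IHs t IHt].
  - split; [|split].
    + intro c. destruct (classic (U (fun l => tvm M l (cval M _ c l) = true))) as [H|H].
      * exists true. simpl. split; [exists c; auto|]. tauto.
      * exists false. simpl. split; [exists c; auto|]. split; [discriminate|tauto].
    + intros p p' x [[c ->] Hx] [[c' ->] Hx']. destruct x.
      * apply (U_mono _ _ HU _ _ (U_and _ _ HU _ _ (proj1 Hx eq_refl) (proj1 Hx' eq_refl))).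
        intros l [H1 H2]. apply (tv_inj M l). congruence.
      * assert (N1 : ~ U (fun l => tvm M l (cval M o c l) = true)) by (intro H; apply Hx in H; discriminate).
        assert (N2 : ~ U (fun l => tvm M l (cval M o c' l) = true)) by (intro H; apply Hx' in H; discriminate).
        destruct (U_dtv _ _ HU c) as [H1|H1]; [tauto|].
        destruct (U_dtv _ _ HU c') as [H2|H2]; [tauto|].
        apply (U_mono _ _ HU _ _ (U_and _ _ HU _ _ H1 H2)).
        intros l [E1 E2]. apply (tv_inj M l).
        destruct (tvm M l (cval M o c l)), (tvm M l (cval M o c' l)); congruence.
    + intros p p' x [_ Hx] HQ E. split; auto. rewrite Hx. split; intro H.
      * apply (U_mono _ _ HU _ _ (U_and _ _ HU _ _ H E)). intros l [H1 H2]. congruence.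
      * apply (U_mono _ _ HU _ _ (U_and _ _ HU _ _ H E)). intros l [H1 H2]. congruence.
  - split; [|split].
    + intro c. exists (cls M U HU a c). exists c; split; auto. apply ceq_sym; auto. apply cls_ceq.
    + intros p p' d [c [-> Hc]] [c' [-> Hc']].
      change (ceq M U _ c c'). eapply ceq_trans; eauto. apply ceq_sym; auto.
    + intros p p' d [c [-> Hc]] [c' ->] E. exists c'; split; auto.
      eapply ceq_trans; [auto| |exact Hc]. apply ceq_sym; auto.
  - destruct IHs as [L2s [L3s L5s]]. destruct IHt as [L2t [L3t L5t]].
    split; [|split].
    + intro c.
      set (g := fun x : Dm M U s =>
        match excluded_middle_informative (exists cz : code s, R M U s (cval M s cz) x) with
        | left H => proj1_sig (constructive_indefinite_description _
                      (L2t (CApp s t c (proj1_sig (constructive_indefinite_description _ H)))))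
        | right _ => Dm_def M U HU t
        end).
      exists g. simpl. split; [exists c; auto|]. intros z x Hzx.
      destruct (R_inQ _ _ _ _ _ Hzx) as [cz' ->].
      unfold g. destruct (excluded_middle_informative (exists cz : code s, R M U s (cval M s cz) x))
        as [H|H]; [|exfalso; eauto].
      destruct (constructive_indefinite_description _ H) as [cz Hcz]. simpl.
      apply L5t with (cval M _ (CApp s t c cz)).
      * exact (proj2_sig (constructive_indefinite_description _ (L2t (CApp s t c cz)))).
      * red; exists (CApp s t c cz'); reflexivity.
      * apply (U_mono _ _ HU _ _ (L3s _ _ _ Hcz Hzx)). intros l E. simpl. unfold fapp. rewrite E; auto.
    + intros p p' g [[c ->] Hp] [[c' ->] Hp'].
      destruct (L2s (CDiff s t c c')) as [y Hy].
      assert (H := L3t _ _ _ (Hp _ _ Hy) (Hp' _ _ Hy)).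
      apply (U_mono _ _ HU _ _ H). intros l E.
      destruct (classic (cval M _ c l = cval M _ c' l)) as [E'|E']; auto.
      exfalso. apply (dwit_spec _ _ _ _ _ E'). exact E.
    + intros p p' g [_ Hp] [c' ->] E. simpl. split; [exists c'; auto|]. intros z x Hzx.
      destruct (R_inQ _ _ _ _ _ Hzx) as [cz ->].
      apply L5t with (fapp M p (cval M s cz)); auto.
      * red; exists (CApp s t c' cz); reflexivity.
      * apply (U_mono _ _ HU _ _ E). intros l El. unfold fapp. rewrite El; auto.
Qed.

Definition Mframe M U (HU : UP M U) : frame :=
  {| D := Dm M U;
     D_ne := fun s => inhabits (Dm_def M U HU s);
     app := fun s t (f : Dm M U (TArr s t)) (a : Dm M U s) => f a;
     app_ext := fun s t f g H => functional_extensionality f g H |}.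

Definition dec (P : Prop) : bool := if excluded_middle_informative P then true else false.
Lemma dec_true (P : Prop) : dec P = true <-> P.
Proof. unfold dec; destruct (excluded_middle_informative P); split; auto; discriminate. Qed.

Definition IM M U (HU : UP M U) : asg (Mframe M U HU) :=
  fun x => match x return Dm M U (ntype x) with
  | NNeg => negb
  | NImp => implb
  | NEq s => fun a b => dec (a = b)
  | NAll a => fun f => dec (forall d, f d = true)
  | NVar s n => proj1_sig (constructive_indefinite_description _
                  (proj1 (J M U HU s) (CTm s (TN (NVar s n)))))
  end.

Definition vfam M (E : forall l, asg (Fm M l)) s (t : tm s) : fam M s :=
  fun l => val (Fm M l) (Hstd M l) (E l) s t.

Definition good M (E : forall l, asg (Fm M l)) : Prop := forall s (t : tm s), inQ M s (vfam M E s t).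

Definition envrel M U HU (E : forall l, asg (Fm M l)) (Jm : asg (Mframe M U HU)) : Prop :=
  forall x, name_efo x = true -> R M U (ntype x) (fun l => E l x) (Jm x).

Lemma vfam_TL M E x t (b : tm t) (z : fam M (ntype x)) :
  fapp M (vfam M E _ (TL x b)) z = vfam M (fun l => upd (Fm M l) (E l) x (z l)) t b.
Proof.
  apply functional_extensionality_dep. intro l. unfold fapp, vfam.
  symmetry. apply val_eq.
  assert (H := ev_inv _ _ _ _ _ (val_ev (Fm M l) (Hstd M l) (E l) _ (TL x b))). simpl in H. apply H.
Qed.

Lemma vfam_TA M E s t (u : tm (TArr s t)) (w : tm s) :
  vfam M E t (TA u w) = fapp M (vfam M E _ u) (vfam M E _ w).
Proof.
  apply functional_extensionality_dep. intro l. unfold fapp, vfam.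
  apply val_eq. econstructor; apply val_ev.
Qed.

Lemma vfam_TN M E x : vfam M E _ (TN x) = fun l => E l x.
Proof.
  apply functional_extensionality_dep. intro l. unfold vfam. apply val_eq. constructor.
Qed.

Lemma FL M U (HU : UP M U) s (t : tm s) : efo t = true ->
  forall E Jm, good M E -> envrel M U HU E Jm ->
  forall w, ev (Mframe M U HU) Jm s t w -> R M U s (vfam M E s t) w.
Proof.
  induction t; simpl; intros He E Jm HE HJ w Hw; apply ev_inv in Hw; simpl in Hw.
  - subst w. rewrite vfam_TN. apply HJ; auto.
  - apply andb_prop in He; destruct He as [He1 He2].
    destruct Hw as (f & a & Hf & Ha & ->). rewrite vfam_TA.
    assert (H1 := IHt1 He1 E Jm HE HJ _ Hf). assert (H2 := IHt2 He2 E Jm HE HJ _ Ha).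
    simpl in H1. apply H1. exact H2.
  - apply andb_prop in He; destruct He as [He1 He2].
    simpl. split; [apply HE|]. intros z d Hzd. rewrite vfam_TL.
    apply (IHt He2 _ (upd (Mframe M U HU) Jm x d)).
    + intros s' t'. rewrite <- vfam_TL.
      destruct (HE _ (TL x t')) as [c Hc]. destruct (R_inQ _ _ _ _ _ Hzd) as [cz Hcz].
      exists (CApp _ _ c cz). rewrite Hc, Hcz. reflexivity.
    + intros y Hy. unfold upd. destruct (name_eq_dec x y) as [e|ne].
      * subst y. simpl. exact Hzd.
      * apply HJ; auto.
    + apply Hw.
Qed.

Lemma tv_neg M l a : tvm M l (app (Fm M l) (Im M l NNeg) a) = negb (tvm M l a).
Proof. apply (Hlog M l). Qed.
Lemma tv_imp M l a b : tvm M l (app (Fm M l) (app (Fm M l) (Im M l NImp) a) b) = implb (tvm M l a) (tvm M l b).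
Proof. apply (Hlog M l). Qed.
Lemma tv_eq M l s a b : tvm M l (app (Fm M l) (app (Fm M l) (Im M l (NEq s)) a) b) = true <-> a = b.
Proof. apply (Hlog M l). Qed.
Lemma tv_all M l al f : tvm M l (app (Fm M l) (Im M l (NAll al)) f) = true <->
   forall a, tvm M l (app (Fm M l) f a) = true.
Proof. apply (Hlog M l). Qed.

Lemma Ucontra M U (HU : UP M U) Y Y' : U Y -> U Y' -> (forall l, Y l -> Y' l -> False) -> False.
Proof.
  intros H1 H2 H. apply (U_prop _ _ HU). apply (U_mono _ _ HU _ _ (U_and _ _ HU _ _ H1 H2)).
  intros l [A B]; eauto.
Qed.

Lemma Rbool M U (HU : UP M U) z b : R M U o z b ->
  (b = true /\ U (fun l => tvm M l (z l) = true)) \/ (b = false /\ U (fun l => tvm M l (z l) <> true)).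
Proof.
  intros [[c ->] Hb]. destruct (U_dtv _ _ HU c) as [H|H].
  - left; split; auto. apply Hb; auto.
  - right; split; auto. destruct b; auto. exfalso. eapply (Ucontra M U HU); [apply Hb; reflexivity|exact H|].
    simpl; auto.
Qed.

Lemma inQ_I M x : inQ M _ (fun l => Im M l x).
Proof. exists (CTm _ (TN x)). symmetry. exact (vfam_TN M (Im M) x). Qed.

Lemma inQ_app M s t (p : fam M (TArr s t)) z : inQ M _ p -> inQ M _ z -> inQ M _ (fapp M p z).
Proof. intros [c ->] [cz ->]. exists (CApp _ _ c cz). reflexivity. Qed.

Ltac iq M := first [exact (inQ_I M NNeg) | exact (inQ_I M NImp) | exact (inQ_I M (NEq _)) | exact (inQ_I M (NAll _))].

Ltac rq := match goal with H : _ |- inQ ?M ?s ?z => exact (R_inQ M _ s z _ H) end.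

Lemma envrel_init M U (HU : UP M U) : envrel M U HU (Im M) (IM M U HU).
Proof.
  intros x Hx. destruct x as [ | | s | al | s n]; simpl in Hx.
  - simpl. split; [iq M|]. intros z b Hzb. split; [apply inQ_app; [iq M|rq]|].
    unfold fapp. destruct (Rbool M U HU _ _ Hzb) as [[-> HT]|[-> HF]]; simpl; split; intro H.
    + discriminate.
    + exfalso. eapply (Ucontra M U HU); [exact H|exact HT|]. simpl. intros l H1 H2.
      rewrite tv_neg, H2 in H1. discriminate.
    + apply (U_mono _ _ HU _ _ HF). intros l H1. rewrite tv_neg. destruct (tvm M l (z l)); auto.
    + reflexivity.
  - simpl. split; [iq M|]. intros z1 b1 H1. split; [apply inQ_app; [iq M|rq]|].
    intros z2 b2 H2. split.
    { apply inQ_app; [apply inQ_app; [iq M|rq]|rq]. }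
    unfold fapp.
    destruct (Rbool M U HU _ _ H1) as [[-> HT1]|[-> HF1]].
    + destruct (Rbool M U HU _ _ H2) as [[-> HT2]|[-> HF2]]; simpl; split; intro H.
      * apply (U_mono _ _ HU _ _ HT2). intros l E. rewrite tv_imp, E. destruct (tvm M l (z1 l)); auto.
      * reflexivity.
      * discriminate.
      * exfalso. apply (U_prop _ _ HU).
        apply (U_mono _ _ HU _ _ (U_and _ _ HU _ _ H (U_and _ _ HU _ _ HT1 HF2))).
        intros l [E1 [E2 E3]]. rewrite tv_imp, E2 in E1. simpl in E1. auto.
    + simpl; split; intro H; auto.
      apply (U_mono _ _ HU _ _ HF1). intros l E. rewrite tv_imp. destruct (tvm M l (z1 l)); simpl; auto.
  - destruct s as [[|a]|s1 s2]; try discriminate.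
    simpl. split; [iq M|]. intros z1 d1 H1. split; [apply inQ_app; [iq M|rq]|].
    intros z2 d2 H2. split.
    { apply inQ_app; [apply inQ_app; [iq M|rq]|rq]. }
    unfold fapp. rewrite dec_true.
    destruct H1 as [c1 [-> E1]]. destruct H2 as [c2 [-> E2]].
    split; intro H.
    + subst d2. assert (E : ceq M U _ c1 c2) by (eapply ceq_trans; eauto; apply ceq_sym; auto).
      apply (U_mono _ _ HU _ _ E). intros l El. apply tv_eq. exact El.
    + assert (E : ceq M U _ c1 c2).
      { apply (U_mono _ _ HU _ _ H). intros l El. apply tv_eq in El. exact El. }
      rewrite <- (cls_rep M U HU a d1), <- (cls_rep M U HU a d2).
      apply cls_eq. eapply ceq_trans; [auto| |eapply ceq_trans; [auto|exact E|exact E2]].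
      apply ceq_sym; auto.
  - simpl. split; [iq M|]. intros p f Hpf. simpl in Hpf.
    split; [apply inQ_app; [iq M|rq]|].
    destruct (proj1 Hpf) as [c ->].
    unfold fapp. rewrite dec_true.
    assert (Hw : R M U (sort al) (cval M _ (CWit al c)) (cls M U HU al (CWit al c))).
    { exists (CWit al c). split; auto. apply ceq_sym; auto. apply cls_ceq. }
    assert (Hp := proj2 Hpf _ _ Hw). destruct Hp as [_ Hp].
    split; intro H.
    + apply (U_mono _ _ HU _ _ (proj1 Hp (H _))). intros l E. apply tv_all. intro a0.
      destruct (tvm M l (app (Fm M l) (cval M _ c l) a0)) eqn:Ea; auto.
      unfold fapp in E; simpl in E. rewrite (awit_spec _ _ _ _ (ex_intro _ a0 Ea)) in E. discriminate.
    + intro d.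
      assert (Hd : R M U (sort al) (cval M _ (proj1_sig d)) d).
      { exists (proj1_sig d); split; auto. apply ceq_refl; auto. }
      destruct (proj2 Hpf _ _ Hd) as [_ Hq]. apply Hq.
      apply (U_mono _ _ HU _ _ H). intros l E. apply tv_all. exact E.
  - simpl. rewrite <- vfam_TN with (E := Im M). unfold IM.
    exact (proj2_sig (constructive_indefinite_description _ (proj1 (J M U HU s) (CTm s (TN (NVar s n)))))).
Qed.

Definition Xq M k (l : Lst) := exists c : code o, enc_code c = k /\ tvm M l (cval M o c l) = true.
Definition meets (A : tm o -> Prop) (b : Lst -> Prop) :=
  forall c : Lst, (forall f, In f c -> A f) -> exists l, incl c l /\ b l.

Fixpoint bseq M A k : Lst -> Prop :=
  match k with
  | 0 => fun l => forall f, In f l -> A f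
  | S k => fun l => bseq M A k l /\
      (if excluded_middle_informative (meets A (fun l => bseq M A k l /\ Xq M k l))
       then Xq M k l else ~ Xq M k l)
  end.

Lemma meets_b M A k : meets A (bseq M A k).
Proof.
  induction k; simpl.
  - intros c Hc. exists c; split; auto. apply incl_refl.
  - destruct (excluded_middle_informative (meets A (fun l => bseq M A k l /\ Xq M k l))) as [H|H]; auto.
    intros c Hc. apply not_all_ex_not in H. destruct H as [c1 H].
    apply imply_to_and in H. destruct H as [Hc1 H].
    destruct (IHk (c ++ c1)) as [l [Hl Hb]].
    { intros f Hf. apply in_app_or in Hf. destruct Hf; auto. }
    exists l. split; [intros x Hx; apply Hl; apply in_or_app; auto|]. split; auto.
    intro HX. apply H. exists l. split; auto. intros x Hx; apply Hl; apply in_or_app; auto.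
Qed.

Lemma b_le M A k k' : k <= k' -> forall l, bseq M A k' l -> bseq M A k l.
Proof.
  induction 1; auto. intros l H'. apply IHle. simpl in H'. apply H'.
Qed.

Lemma b_A M A k l : bseq M A k l -> forall f, In f l -> A f.
Proof. intro H. apply (b_le M A 0 k (Nat.le_0_l k) l H). Qed.

Definition Ufil M A (Y : Lst -> Prop) : Prop :=
  exists k c, (forall f, In f c -> A f) /\ forall l, bseq M A k l -> incl c l -> Y l.

Lemma Xq_iff M (c : code o) l : Xq M (enc_code c) l <-> tvm M l (cval M o c l) = true.
Proof.
  split.
  - intros [c' [E H]]. apply enc_code_inj' in E. subst; auto.
  - intro H. exists c; auto.
Qed.

Lemma Ufil_UP M A : UP M (Ufil M A).
Proof.
  constructor.
  - intros Y Y' [k [c [Hc H]]] HY. exists k, c; split; auto.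
  - intros Y Y' [k [c [Hc H]]] [k' [c' [Hc' H']]]. exists (Nat.max k k'), (c ++ c'). split.
    + intros f Hf; apply in_app_or in Hf; destruct Hf; auto.
    + intros l Hb Hi. split.
      * apply H; [eapply b_le; [|exact Hb]; apply Nat.le_max_l|].
        intros x Hx; apply Hi; apply in_or_app; auto.
      * apply H'; [eapply b_le; [|exact Hb]; apply Nat.le_max_r|].
        intros x Hx; apply Hi; apply in_or_app; auto.
  - intros [k [c [Hc H]]]. destruct (meets_b M A k c Hc) as [l [Hl Hb]]. exact (H l Hb Hl).
  - exists 0, nil. split; auto. simpl; tauto.
  - intro c. set (k := enc_code c).
    destruct (excluded_middle_informative (meets A (fun l => bseq M A k l /\ Xq M k l))) as [H|H].
    + left. exists (S k), nil. split; [simpl; tauto|]. intros l Hb _. simpl in Hb.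
      destruct Hb as [_ Hb]. destruct (excluded_middle_informative _) as [_|H']; [|contradiction].
      apply Xq_iff. exact Hb.
    + right. exists (S k), nil. split; [simpl; tauto|]. intros l Hb _. simpl in Hb.
      destruct Hb as [_ Hb]. destruct (excluded_middle_informative _) as [H'|_]; [contradiction|].
      intro E. apply Hb. apply Xq_iff. exact E.
Qed.

Lemma Ucone M A f : A f -> Ufil M A (fun l => In f l /\ forall g, In g l -> A g).
Proof.
  intro Hf. exists 0, (f :: nil). split.
  - intros g [->|[]]; auto.
  - intros l Hb Hi. split; [apply Hi; left; auto|]. exact Hb.
Qed.

Lemma mod_ex (A : tm o -> Prop)
  (Hfin : forall l : list (tm o), (forall f, In f l -> A f) -> has_std_model (fun f => In f l)) l :
  exists X : {F : frame & {I : asg F & D F o -> bool}},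
    standard (projT1 X) /\ logical (projT1 X) (projT1 (projT2 X)) (projT2 (projT2 X)) /\
    ((forall f, In f l -> A f) -> forall f, In f l ->
       exists v, ev (projT1 X) (projT1 (projT2 X)) o f v /\ projT2 (projT2 X) v = true).
Proof.
  destruct (classic (forall f, In f l -> A f)) as [H|H].
  - destruct (Hfin l H) as (F & I & tv & Hs & Hl & Hm).
    exists (existT _ F (existT _ I tv)). simpl. auto.
  - destruct (Hfin nil (fun f (Hf : In f nil) => match Hf with end)) as (F & I & tv & Hs & Hl & Hm).
    exists (existT _ F (existT _ I tv)). simpl. split; [auto|split; [auto|intro H'; contradiction]].
Qed.

Theorem theorem14p6
  (norm : forall s, tm s -> tm s) (sapp : subst -> forall s, tm s -> tm s)
  (Hnorm : normalizer norm) (Hsubst : subst_op norm sapp)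
  (A : tm o -> Prop) (HA : efo_branch norm A)
  (Hfin : forall l : list (tm o), (forall f, In f l -> A f) ->
          has_std_model (fun f => In f l)) :
  exists (F : frame) (I : asg F) (tv : D F o -> bool),
    std_model A F I tv /\ forall al : nat, countable_type (D F (sort al)).
Proof.
  pose (Xm := fun l => constructive_indefinite_description _ (mod_ex A Hfin l)).
  pose (M := {| Fm := fun l => projT1 (proj1_sig (Xm l));
                Im := fun l => projT1 (projT2 (proj1_sig (Xm l)));
                tvm := fun l => projT2 (projT2 (proj1_sig (Xm l)));
                Hstd := fun l => proj1 (proj2_sig (Xm l));
                Hlog := fun l => proj1 (proj2 (proj2_sig (Xm l))) |}).
  assert (Hmod : forall l, (forall f, In f l -> A f) -> forall f, In f l ->
             exists v, ev (Fm M l) (Im M l) o f v /\ tvm M l v = true)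
    by (intro l; exact (proj2 (proj2 (proj2_sig (Xm l))))).
  clearbody M. clear Xm.
  pose (U := Ufil M A). assert (HU : UP M U) by apply Ufil_UP.

  assert (HstdM : standard (Mframe M U HU)) by (intros s t h; exists h; reflexivity).
  assert (Hgood : good M (Im M)) by (intros s t; exists (CTm s t); reflexivity).
  assert (Htruth : forall f, A f -> forall l, (In f l /\ forall g, In g l -> A g) ->
     exists v, ev (Fm M l) (Im M l) o f v /\ tvm M l v = true /\ vfam M (Im M) o f l = v).
  { intros f Hf l [Hin Hl]. destruct (Hmod l Hl f Hin) as [v [Hv Ht]]. exists v; split; auto.
    split; auto. apply val_eq; auto. }
  exists (Mframe M U HU), (IM M U HU), (fun b => b).
  split; [split; [exact HstdM|split]|].
  - unfold logical. simpl. split; [auto|]. split; [intro b; exists b; auto|].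
    split; [auto|]. split; [auto|]. split.
    + intros s a b. apply dec_true.
    + intros al f. apply dec_true.
  - intros f Hf. destruct (HA f Hf) as [_ Hq]. assert (Hc := Ucone M A f Hf).
    destruct Hq as [He | (s & a & b & Ha & Hb & ->)].
    + destruct (ev_ex _ HstdM o f (IM M U HU)) as [w Hw]. exists w. split; auto.
      assert (HR := FL M U HU o f He (Im M) (IM M U HU) Hgood (envrel_init M U HU) w Hw).
      destruct HR as [_ HR]. apply HR. apply (U_mono _ _ HU _ _ Hc).
      intros l Hl. destruct (Htruth f Hf l Hl) as [v [_ [Ht E]]]. rewrite E; auto.
    + destruct (ev_ex _ HstdM s a (IM M U HU)) as [va Hva].
      destruct (ev_ex _ HstdM s b (IM M U HU)) as [vb Hvb].
      exists (app (Mframe M U HU) (IM M U HU NNeg)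
               (app (Mframe M U HU) (app (Mframe M U HU) (IM M U HU (NEq s)) va) vb)).
      split.
      { unfold neq. apply ev_A; [exact (ev_N _ _ NNeg)|]. apply ev_A; [apply ev_A; [exact (ev_N _ _ (NEq s))|exact Hva]|exact Hvb]. }
      destruct (classic (va = vb)) as [Ed|Ed].
      2:{ simpl. unfold dec. match goal with |- context [excluded_middle_informative ?P] => destruct (excluded_middle_informative P) end; [contradiction|reflexivity]. }
      subst vb. exfalso.
      assert (Ra := FL M U HU s a Ha (Im M) (IM M U HU) Hgood (envrel_init M U HU) va Hva).
      assert (Rb := FL M U HU s b Hb (Im M) (IM M U HU) Hgood (envrel_init M U HU) va Hvb).
      assert (E := proj1 (proj2 (J M U HU s)) _ _ _ Ra Rb).
      apply (Ucontra M U HU _ _ E Hc). intros l El Hl.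
      destruct (Htruth _ Hf l Hl) as [v [Hv [Ht _]]].
      assert (Hv' : ev (Fm M l) (Im M l) o (neq a b)
         (app (Fm M l) (Im M l NNeg) (app (Fm M l) (app (Fm M l) (Im M l (NEq s))
             (vfam M (Im M) s a l)) (vfam M (Im M) s b l)))).
      { unfold neq, vfam. apply ev_A; [exact (ev_N _ _ NNeg)|].
        apply ev_A; [apply ev_A; [exact (ev_N _ _ (NEq s))|apply val_ev]|apply val_ev]. }
      rewrite (ev_det _ _ _ _ _ _ Hv Hv') in Ht.
      rewrite tv_neg in Ht. rewrite El in Ht.
      assert (T := proj2 (tv_eq M l s (vfam M (Im M) s b l) (vfam M (Im M) s b l)) eq_refl).
      rewrite T in Ht. discriminate.
  - intro al. exists (fun d : Dsort M U al => enc_code (proj1_sig d)). intros x y H.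
    apply Dsort_eq. apply enc_code_inj'. exact H.
Qed.
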